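(* In the reduction instance $NTP([a_j]_{j\in A},W)$, there exists $A'\subseteq A$ such that the block schedule $S(A')$ is an optimal schedule.
   Context: Reduction instance. Let $N\ge1$, $A=\{1,\dots,N\}$, positive integers $a_1,\dots,a_N$, positive integer $W\le\sum_{j\in A}a_j$. Set $M=N+\sum_{j\in A}a_j+1$, employees $\mathcal E=\{1,\dots,M\}$ (smaller index = more senior). For $k\in A$: $i_k=k+\sum_{j=1}^{k-1}a_j$ (critical employees), $\mathcal E^S_k=\{i: i_k<i\le i_k+a_k\}$ (stable block). Response delays: $r_{i_k}=\sum_{j=1}^{k}a_j$; for $i\in\mathcal E^S_k$, $r_i=\sum_{j=1}^{k-1}a_j$; $r_M=\sum_{j\in A}a_j$. Let $C^*_0=2\sum_j a_j$ and $H=C^*_0-W$. A schedule $S=(s_i,e_i)_{i\in\mathcal E}$ has $s_i\ge0$, $e_i=s_i+r_i$; it is feasible if $s_1\le\dots\le s_M$ and $e_i\le H$ for all $i$. $b_i=|\{j: i<j,\ e_j<e_i\}|$, $B(S)=\sum_i b_i$. A schedule is optimal if it is feasible and minimizes $B(S)$ among feasible schedules. Block schedule $S(A')$, $A'\subseteq A$: $s_1=0$; for $i\ge2$, $s_i=s_{i_k}+a_k$ if $i=i_k+1$ for some $k\in A\setminus A'$, and $s_i=s_{i-1}$ otherwise; $e_i=s_i+r_i$. *)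

(* Defs.v *)
From HB Require Import structures.
From mathcomp Require Import all_boot all_order all_algebra.
From mathcomp Require Import reals.
Set Implicit Arguments. Unset Strict Implicit. Unset Printing Implicit Defensive.
Import Order.TTheory GRing.Theory Num.Theory.

Section NTP.
Variables (N : nat) (a : nat -> nat).

Definition psum (k : nat) : nat := \sum_(1 <= j < k.+1) a j.
Definition sumA : nat := psum N.
Definition M : nat := N + sumA + 1.
Definition crit (k : nat) : nat := k + psum k.-1.
Definition is_crit (i : nat) : bool := has (fun k => crit k == i) (iota 1 N).
(* the block index k with i_k <= i <= i_k + a_k (for 1 <= i <= M-1) *)
Definition blk (i : nat) : nat := \max_(1 <= k < N.+1 | crit k <= i) k.

Definition resp (i : nat) : nat :=
  if i == M then sumA
  else if is_crit i then psum (blk i)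
  else psum (blk i).-1.

Variables (R : realType) (W : nat).
Local Open Scope ring_scope.

Definition H : R := 2 * (sumA%:R) - W%:R.
Definition endt (s : nat -> R) (i : nat) : R := s i + (resp i)%:R.

Definition feasible (s : nat -> R) : Prop :=
  (forall i, (1 <= i <= M)%N -> 0 <= s i) /\
  (forall i, (1 <= i < M)%N -> s i <= s i.+1) /\
  (forall i, (1 <= i <= M)%N -> endt s i <= H).

Local Close Scope ring_scope.
Definition Bcost (s : nat -> R) : nat :=
  \sum_(1 <= i < M.+1) \sum_(i.+1 <= j < M.+1) nat_of_bool (endt s j < endt s i)%R.

Local Open Scope ring_scope.
Definition optimal (s : nat -> R) : Prop :=
  feasible s /\ forall s', feasible s' -> (Bcost s <= Bcost s')%N.

Fixpoint block_start (A' : pred nat) (i : nat) : R :=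
  match i with
  | 0 => 0
  | j.+1 => if j == 0%N then 0
            else block_start A' j +
                 (if is_crit j && ~~ A' (blk j) then (a (blk j))%:R else 0)
  end.

End NTP.

(* Main.v *)
Require Import Defs.
From HB Require Import structures.
From mathcomp Require Import all_boot all_order all_algebra.
From mathcomp Require Import reals.
From mathcomp Require Import zify ring lra.
Import Order.TTheory GRing.Theory Num.Theory.

Section Basic.
Variables (N : nat) (a : nat -> nat).

Lemma psum0 : psum a 0 = 0%N.
Proof. by rewrite /psum big_geq. Qed.

Lemma psumS k : psum a k.+1 = (psum a k + a k.+1)%N.
Proof. by rewrite /psum big_nat_recr. Qed.

Lemma psum_mono m n : (m <= n)%N -> (psum a m <= psum a n)%N.
Proof.
move=> /subnKC <-; elim: (n - m)%N => [|d IH]; first by rewrite addn0.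
by rewrite addnS psumS (leq_trans IH) // leq_addr.
Qed.

Lemma critS k : (0 < k)%N -> crit a k.+1 = (crit a k + a k + 1)%N.
Proof.
case: k => // k _; rewrite /crit /= psumS; lia.
Qed.

Lemma crit_lt {k k'} : (k < k')%N -> (crit a k < crit a k')%N.
Proof.
move=> lt; rewrite /crit.
have := psum_mono (k.-1) (k'.-1) ltac:(lia). lia.
Qed.

Lemma crit_le {k k'} : (k <= k')%N -> (crit a k <= crit a k')%N.
Proof.
rewrite leq_eqVlt => /orP [/eqP -> //| /crit_lt]; exact: ltnW.
Qed.

Lemma crit1 : crit a 1 = 1%N.
Proof. by rewrite /crit /= psum0. Qed.

Lemma critM : crit a N.+1 = M N a.
Proof. rewrite /crit /M /sumA /=; lia. Qed.

Lemma crit_inj k k' : crit a k = crit a k' -> k = k'.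
Proof.
move=> e; case: (ltngtP k k') => // /crit_lt; rewrite e ltnn //.
Qed.

Lemma is_crit_in k i : (1 <= k <= N)%N -> (crit a k <= i < crit a k.+1)%N ->
  is_crit N a i = (i == crit a k).
Proof.
move=> hk hi; apply/hasP/eqP.
- move=> [k' hk' /eqP e]; rewrite -e; congr crit.
  case: (ltngtP k' k) => // h.
  + have := crit_lt h; lia.
  + have := crit_le h; lia.
- move=> ->; exists k => //; rewrite mem_iota; lia.
Qed.

Lemma blk_in k i : (1 <= k <= N)%N -> (crit a k <= i < crit a k.+1)%N ->
  blk N a i = k.
Proof.
move=> hk hi; apply/eqP; rewrite eqn_leq; apply/andP; split.
- apply/bigmax_leqP_seq => k'; rewrite mem_index_iota => hk' hc.
  case: (leqP k' k) => // h; have := crit_le h; lia.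
- rewrite /blk; apply: (@leq_bigmax_seq _ _ _ (fun x => x)) => //.
  rewrite mem_index_iota; lia. lia.
Qed.

Lemma resp_in k i : (1 <= k <= N)%N -> (crit a k <= i < crit a k.+1)%N ->
  resp N a i = if i == crit a k then psum a k else psum a k.-1.
Proof.
move=> hk hi; rewrite /resp.
have -> : (i == M N a) = false.
  apply/negbTE; rewrite -critM; have := crit_le (k:=k.+1) (k':=N.+1) ltac:(lia); lia.
by rewrite (is_crit_in _ _ hk hi) (blk_in _ _ hk hi).
Qed.

Lemma resp_M : resp N a (M N a) = sumA N a.
Proof. by rewrite /resp eqxx. Qed.

Lemma block_exists i : (1 <= i < M N a)%N ->
  exists k, (1 <= k <= N)%N /\ (crit a k <= i < crit a k.+1)%N.
Proof.
rewrite -critM.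
suff : forall n, (1 <= i < crit a n.+1)%N ->
  exists k, (1 <= k <= n)%N /\ (crit a k <= i < crit a k.+1)%N by apply.
elim=> [|n IH] hi; first by rewrite crit1 in hi; lia.
case: (ltnP i (crit a n.+1)) => h.
- have [k [hk hk']] := IH ltac:(lia). exists k; split => //; lia.
- exists n.+1; split => //; lia.
Qed.

End Basic.

Lemma sum_unique (r : seq nat) (P : pred nat) (F : nat -> nat) G :
  uniq r -> (forall k k', P k -> P k' -> k = k') ->
  (forall k, k \in r -> P k -> F k <= G) -> \sum_(k <- r | P k) F k <= G.
Proof.
elim: r => [|x r IH] /=; first by rewrite big_nil.
move=> /andP [xr ur] hP hF; rewrite big_cons.
case: ifP => Px.
- rewrite big1_seq ?addn0; first by apply: hF; rewrite ?inE ?eqxx.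
  move=> k /andP [Pk kr]; have e := hP _ _ Pk Px; by rewrite -e kr in xr.
- apply: IH => // k kr; apply: hF; by rewrite inE kr orbT.
Qed.

Lemma sum_ge_term (r : seq nat) (P : pred nat) (F : nat -> nat) k0 :
  k0 \in r -> uniq r -> P k0 -> F k0 <= \sum_(k <- r | P k) F k.
Proof.
move=> kr ur Pk; rewrite big_mkcond (bigD1_seq k0) //= Pk; exact: leq_addr.
Qed.

Lemma exch (P : pred nat) (F : nat -> nat) (c : nat -> nat) n m :
  (forall k, 1 <= k < n.+1 -> P k -> 1 <= c k < m.+1) ->
  \sum_(1 <= k < n.+1 | P k) F k =
  \sum_(1 <= i < m.+1) \sum_(1 <= k < n.+1 | P k && (c k == i)) F k.
Proof.
move=> hc.
under [RHS]eq_bigr => i _ do rewrite big_mkcondr.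
rewrite (exchange_big_nat _ _ _ _ _ predT P) /=.
rewrite [LHS]big_nat_cond [RHS]big_nat_cond; apply: eq_bigr => k /andP [hk Pk].
have hck := hc k hk Pk.
rewrite (bigD1_seq (c k)) ?mem_index_iota ?iota_uniq //= eqxx big1_seq ?addn0 //.
move=> i /andP [ne _]; by rewrite eq_sym (negbTE ne).
Qed.

Lemma count_lt m n c :
  \sum_(m <= j < n) nat_of_bool (j < c) <= minn n c - m.
Proof.
elim: n => [|n IH]; first by rewrite big_geq.
case: (ltnP n m) => h.
- by rewrite big_geq.
- rewrite (@big_nat_recr _ _ _ n m) //=.
  case: (ltnP n c) => h2 /=; lia.
Qed.

Local Open Scope ring_scope.

Section Lower.
Variables (N : nat) (a : nat -> nat) (R : realType) (W : nat).

Lemma feas_mono (s : nat -> R) : feasible N a W s ->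
  forall i j, (1 <= i)%N -> (i <= j)%N -> (j <= M N a)%N -> s i <= s j.
Proof.
move=> [_ [hm _]] i j hi hij hj; rewrite -(subnKC hij).
have : (i + (j - i) <= M N a)%N by lia.
elim: (j - i)%N => [|d IH] hd; first by rewrite addn0.
rewrite addnS; apply: le_trans (IH ltac:(lia)) _; apply: hm; lia.
Qed.

Definition Dp (s : nat -> R) (k : nat) : bool :=
  (a k)%:R <= s (crit a k + a k)%N - s (crit a k).

Lemma psum_pred k : (0 < k)%N -> psum a k = (psum a k.-1 + a k)%N.
Proof. by case: k => // k _; rewrite psumS. Qed.

Lemma sum_recr (P : pred nat) (F : nat -> nat) n :
  (\sum_(1 <= k < n.+2 | P k) F k =
   \sum_(1 <= k < n.+1 | P k) F k + (if P n.+1 then F n.+1 else 0))%N.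
Proof. by rewrite big_mkcond big_nat_recr //= -big_mkcond. Qed.

Lemma weight_bound (s : nat -> R) : feasible N a W s ->
  (\sum_(1 <= k < N.+1 | Dp s k) a k + W <= sumA N a)%N.
Proof.
move=> hf.
have key : forall n, (n <= N)%N ->
  (\sum_(1 <= k < n.+1 | Dp s k) a k)%:R <= s (crit a n.+1) - s 1%N.
  elim=> [|n IH] hn.
    by rewrite big_geq // crit1 subrr.
  rewrite sum_recr natrD.
  have IH' := IH ltac:(lia).
  have hc := critS a n.+1 isT.
  have hcM : (crit a n.+2 <= M N a)%N by rewrite -critM; apply: crit_le; lia.
  have hc1 : (1 <= crit a n.+1)%N by rewrite -(crit1 a); apply: crit_le.
  have m1 : s (crit a n.+1 + a n.+1)%N <= s (crit a n.+2).
    apply: (@feas_mono s hf); lia.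
  have m2 : s (crit a n.+1) <= s (crit a n.+1 + a n.+1)%N.
    apply: (@feas_mono s hf); lia.
  case: ifP => hD.
  - move: hD; rewrite /Dp => hD; lra.
  - lra.
have := key N (leqnn N); rewrite critM => h.
case: hf => [h0 [_ hH]].
have hs1 : 0 <= s 1%N by apply: h0; rewrite /M; lia.
have hM := hH (M N a) ltac:(rewrite /M; lia).
move: hM; rewrite /endt resp_M /H => hM.
rewrite -(ler_nat R) natrD; lra.
Qed.

Lemma inner_ge (s : nat -> R) k : feasible N a W s -> (1 <= k <= N)%N -> ~~ Dp s k ->
  (a k <= \sum_((crit a k).+1 <= j < (M N a).+1)
          nat_of_bool (endt N a s j < endt N a s (crit a k))%R)%N.
Proof.
move=> hf hk hD.
have hc := critS a k ltac:(lia).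
have hcM : (crit a k.+1 <= M N a)%N by rewrite -critM; apply: crit_le; lia.
have hc1 : (1 <= crit a k)%N by rewrite -(crit1 a); apply: crit_le; lia.
rewrite (@big_cat_nat _ _ _ (crit a k + a k).+1) /=; [|lia|lia].
apply: leq_trans (leq_addr _ _).
rewrite (@eq_big_nat _ _ _ _ _ _ (fun=> 1%N)) ?sum_nat_const_nat; first lia.
move=> j hj.
have hjb : (crit a k <= j < crit a k.+1)%N by lia.
rewrite /endt (@resp_in N a k j hk hjb) (@resp_in N a k (crit a k) hk ltac:(lia)) eqxx.
have -> : (j == crit a k) = false by apply/negbTE; lia.
rewrite (psum_pred k) ?natrD; last lia.
have m1 : s j <= s (crit a k + a k)%N by apply: (@feas_mono s hf); lia.
move: hD; rewrite /Dp -ltNge => hD.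
have -> : s j + (psum a k.-1)%:R < s (crit a k) + ((psum a k.-1)%:R + (a k)%:R) by lra.
by [].
Qed.

Lemma lower_bound (s : nat -> R) : feasible N a W s ->
  (\sum_(1 <= k < N.+1 | ~~ Dp s k) a k <= Bcost N a s)%N.
Proof.
move=> hf.
rewrite (@exch _ _ (crit a) N (M N a)); last first.
  move=> k hk _; have := crit_lt a (k:=k) (k':=N.+1) ltac:(lia).
  rewrite critM; have := crit_le a (k:=1) (k':=k) ltac:(lia); rewrite crit1; lia.
rewrite /Bcost; apply: leq_sum => i _.
apply: sum_unique; first exact: iota_uniq.
  by move=> k k' /andP [_ /eqP e] /andP [_ /eqP e']; apply: (crit_inj a); rewrite e e'.
move=> k; rewrite mem_index_iota => hk /andP [hD /eqP <-].
exact: inner_ge.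
Qed.

End Lower.

Section Block.
Variables (N : nat) (a : nat -> nat) (R : realType) (D : pred nat).

Definition Ap : pred nat := fun k => (1 <= k <= N)%N && ~~ D k.
Definition bs : nat -> R := block_start N a R Ap.
Definition Q (n : nat) : nat := \sum_(1 <= k < n.+1 | D k) a k.

Lemma QS k : (0 < k)%N -> Q k = (Q k.-1 + (if D k then a k else 0))%N.
Proof. by case: k => // k _; rewrite /Q sum_recr. Qed.

Lemma Q_mono m n : (m <= n)%N -> (Q m <= Q n)%N.
Proof.
move=> /subnKC <-; elim: (n - m)%N => [|d IH]; first by rewrite addn0.
rewrite addnS (QS (m+d).+1) //=; lia.
Qed.

Lemma bs_step j : (0 < j)%N -> bs j.+1 =
  bs j + (if is_crit N a j && ~~ Ap (blk N a j) then (a (blk N a j))%:R else 0).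
Proof. by case: j. Qed.

Lemma bs_ge0 i : 0 <= bs i.
Proof.
elim: i => [|i IH] //=; rewrite /bs /=; case: ifP => // _.
apply: addr_ge0 => //; case: ifP => // _; exact: ler0n.
Qed.

Lemma bs_inner k t : (1 <= k <= N)%N -> (t <= a k)%N ->
  bs (crit a k + t).+1 = bs (crit a k) + (if D k then a k else 0)%:R.
Proof.
move=> hk; have hc := critS a k ltac:(lia).
have hc1 : (1 <= crit a k)%N by rewrite -(crit1 a); apply: crit_le; lia.
elim: t => [|t IH] ht.
- rewrite addn0 bs_step //.
  rewrite (@is_crit_in N a k (crit a k) hk ltac:(lia)) eqxx.
  rewrite (@blk_in N a k (crit a k) hk ltac:(lia)) /Ap hk /= negbK.
  by case: (D k).
- rewrite addnS bs_step; last lia.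
  rewrite (@is_crit_in N a k (crit a k + t).+1 hk ltac:(lia)).
  have -> : ((crit a k + t).+1 == crit a k) = false by apply/negbTE; lia.
  by rewrite /= addr0 IH //; lia.
Qed.

Lemma bs_crit k : (1 <= k <= N.+1)%N -> bs (crit a k) = (Q k.-1)%:R.
Proof.
elim: k => [|k IH] hk //.
case: k IH hk => [|k] IH hk.
  by rewrite crit1 /Q big_geq.
rewrite critS // addn1 bs_inner; [|lia|lia].
rewrite IH; last lia.
by rewrite (QS k.+1) // natrD.
Qed.

Lemma bs_in {k i} : (1 <= k <= N)%N -> (crit a k <= i < crit a k.+1)%N ->
  bs i = (if i == crit a k then Q k.-1 else Q k)%:R.
Proof.
move=> hk hi; case: eqP => [->|ne]; first by apply: bs_crit; lia.
have hc := critS a k ltac:(lia).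
have -> : i = (crit a k + (i - crit a k).-1).+1 by lia.
rewrite bs_inner; [|lia|lia].
by rewrite bs_crit ?(QS k) ?natrD //; lia.
Qed.

Lemma e_in {k i} : (1 <= k <= N)%N -> (crit a k <= i < crit a k.+1)%N ->
  endt N a bs i = (if i == crit a k then Q k.-1 + psum a k else Q k + psum a k.-1)%:R.
Proof.
move=> hk hi; rewrite /endt (bs_in hk hi) (@resp_in N a k i hk hi).
by case: ifP; rewrite natrD.
Qed.

Lemma e_M : endt N a bs (M N a) = (Q N + psum a N)%:R.
Proof. rewrite /endt resp_M natrD; congr (_ + _). rewrite -critM bs_crit //; lia. Qed.

Lemma e_bounds {k i} : (1 <= k <= N)%N -> (crit a k <= i < crit a k.+1)%N ->
  (Q k.-1 + psum a k.-1)%:R <= endt N a bs i <= (Q k + psum a k)%:R.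
Proof.
move=> hk hi; rewrite (e_in hk hi) !ler_nat.
have := QS k ltac:(lia); have := psum_pred a k ltac:(lia).
case: (D k); case: (i == crit a k); lia.
Qed.

Lemma bs_inv i j : (1 <= i)%N -> (i < j)%N -> (j <= M N a)%N ->
  endt N a bs j < endt N a bs i ->
  exists k, [/\ (1 <= k <= N)%N, i = crit a k, ~~ D k & (j < crit a k.+1)%N].
Proof.
move=> h1 hij hjM hlt.
have [k [hk hi]] := @block_exists N a i ltac:(lia).
have [/andP [lo hi']] := e_bounds hk hi.
case: (ltnP j (M N a)) => hjM'; last first.
  have ej : j = M N a by lia.
  move: hlt; rewrite ej e_M => hlt.
  have := Q_mono k N ltac:(lia); have := psum_mono a k N ltac:(lia).
  move=> p1 p2; have : (Q k + psum a k)%:R <= (Q N + psum a N)%:R :> R by rewrite ler_nat; lia.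
  move=> h3; have := le_lt_trans h3 (lt_le_trans hlt hi'); by rewrite ltxx.
have [k' [hk' hj]] := @block_exists N a j ltac:(lia).
have kk' : (k <= k')%N.
  case: (leqP k k') => // h; have := crit_le a (k:=k'.+1) (k':=k) h; lia.
have [/andP [lo' hi2]] := e_bounds hk' hj.
case: (ltnP k k') => hkk.
  have := Q_mono k k'.-1 ltac:(lia); have := psum_mono a k k'.-1 ltac:(lia).
  move=> p1 p2; have : (Q k + psum a k)%:R <= (Q k'.-1 + psum a k'.-1)%:R :> R by rewrite ler_nat; lia.
  move=> h3; have := le_lt_trans (le_trans hi' h3) (le_lt_trans lo' hlt); by rewrite ltxx.
have ek : k' = k by lia.
rewrite ek in hj.
move: hlt; rewrite (e_in hk hj) (e_in hk hi) ltr_nat.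
have -> : (j == crit a k) = false by apply/negbTE; lia.
have := QS k ltac:(lia); have := psum_pred a k ltac:(lia).
case: eqP => [ei|nei]; last lia.
case hD: (D k) => p1 p2 hlt; first lia.
exists k; split => //; [by rewrite hD | lia].
Qed.

Lemma upper_bound : (Bcost N a bs <= \sum_(1 <= k < N.+1 | ~~ D k) a k)%N.
Proof.
rewrite (@exch _ _ (crit a) N (M N a)); last first.
  move=> k hk _; have := crit_lt a (k:=k) (k':=N.+1) ltac:(lia).
  rewrite critM; have := crit_le a (k:=1) (k':=k) ltac:(lia); rewrite crit1; lia.
rewrite /Bcost [X in (X <= _)%N]big_nat_cond [X in (_ <= X)%N]big_nat_cond.
apply: leq_sum => i /andP [/andP [hi1 hiM] _].
case: (boolP (has (fun k0 => (i == crit a k0) && ~~ D k0) (iota 1 N))).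
- move=> /hasP [k0]; rewrite mem_iota => hk0 /andP [/eqP ei hD].
  have hk0' : (1 <= k0 <= N)%N by lia.
  have hc := critS a k0 ltac:(lia).
  apply: (@leq_trans (\sum_(i.+1 <= j < (M N a).+1) nat_of_bool (j < crit a k0.+1))).
    rewrite big_nat_cond [X in (_ <= X)%N]big_nat_cond.
    apply: leq_sum => j /andP [/andP [hj1 hj2] _].
    case hlt: (endt N a bs j < endt N a bs i) => //=.
    have [k [hk ek _ hjk]] := bs_inv i j hi1 hj1 ltac:(lia) hlt.
    have ekk : k = k0 by apply: (crit_inj a); rewrite -ek.
    by rewrite -ekk hjk.
  apply: leq_trans (count_lt _ _ _) _.
  apply: (@leq_trans (a k0)); first lia.
  apply: (@sum_ge_term _ (fun k => ~~ D k && (crit a k == i))).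
  + rewrite mem_index_iota; lia.
  + exact: iota_uniq.
  + by rewrite hD ei eqxx.
- move=> hn; rewrite big_nat_cond big1 // => j /andP [/andP [hj1 hj2] _].
  case hlt: (endt N a bs j < endt N a bs i) => //=.
  have [k [hk ek hD hjk]] := bs_inv i j hi1 hj1 ltac:(lia) hlt.
  move/hasP: hn => hn; exfalso; apply: hn; exists k.
    rewrite mem_iota; lia.
  by rewrite ek eqxx hD.
Qed.

End Block.

Lemma exists_opt (N : nat) (a : nat -> nat) (C : nat) :
  exists D : pred nat, (\sum_(1 <= k < N.+1 | D k) a k <= C)%N /\
    forall q : pred nat, (\sum_(1 <= k < N.+1 | q k) a k <= C)%N ->
      (\sum_(1 <= k < N.+1 | q k) a k <= \sum_(1 <= k < N.+1 | D k) a k)%N.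
Proof.
pose F (f : {ffun 'I_N.+1 -> bool}) := (\sum_(1 <= k < N.+1 | f (inord k)) a k)%N.
pose P := fun f => (F f <= C)%N.
have P0 : P [ffun => false].
  by rewrite /P /F big_pred0 // => k; rewrite ffunE.
case: (arg_maxnP F P0) => f Pf maxf.
exists (fun k => f (inord k)); split => // q hq.
have e : (\sum_(1 <= k < N.+1 | q k) a k)%N = F [ffun i : 'I_N.+1 => q (val i)].
  rewrite /F; apply: congr_big_nat => // k /andP [_ hk].
  by rewrite ffunE /= inordK.
rewrite e; apply: maxf; by rewrite /P -e.
Qed.

Lemma compl_sum (N : nat) (a : nat -> nat) (q : pred nat) :
  (\sum_(1 <= k < N.+1 | ~~ q k) a k = sumA N a - \sum_(1 <= k < N.+1 | q k) a k)%N.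
Proof.
rewrite /sumA /psum [(\sum_(1 <= j < N.+1) a j)%N](bigID q) /=; lia.
Qed.

Lemma bs_feasible N a (R : realType) W (D : pred nat) :
  (W <= sumA N a)%N ->
  (\sum_(1 <= k < N.+1 | D k) a k + W <= sumA N a)%N ->
  feasible N a W (bs N a R D).
Proof.
move=> hW hD; split; [|split].
- move=> i _; exact: bs_ge0.
- move=> i /andP [hi _]; rewrite (@bs_step N a R D i hi).
  rewrite lerDl; case: ifP => // _; exact: ler0n.
- move=> i /andP [hi1 hiM].
  have hH : (Q a D N + psum a N)%:R <= H N a R W.
    rewrite /H; have : (Q a D N + psum a N + W <= 2 * sumA N a)%N.
      by rewrite /Q /sumA in hD *; lia.
    rewrite -(ler_nat R) !natrD addr0 => h; lra.
  case: (ltnP i (M N a)) => hi.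
  + have [k [hk hb]] := @block_exists N a i ltac:(lia).
    have [_ h2] := andP (@e_bounds N a R D k i hk hb).
    apply: le_trans h2 (le_trans _ hH); rewrite ler_nat.
    have := Q_mono a D k N ltac:(lia); have := psum_mono a k N ltac:(lia); lia.
  + have -> : i = M N a by lia.
    by rewrite e_M.
Qed.

Theorem lemma3 (R : realType) (N : nat) (a : nat -> nat) (W : nat) :
  (1 <= N)%N ->
  (forall j, (1 <= j <= N)%N -> (0 < a j)%N) ->
  (0 < W)%N -> (W <= sumA N a)%N ->
  exists A' : pred nat,
    (forall k, A' k -> (1 <= k <= N)%N) /\
    optimal N a W (block_start N a R A').
Proof.
move=> hN ha hW0 hW.
have [D [hD hmax]] := exists_opt N a (sumA N a - W).
exists (Ap N D); split; first by move=> k /andP [].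
have -> : block_start N a R (Ap N D) = bs N a R D by [].
split.
- apply: bs_feasible => //; lia.
- move=> s' hf.
  apply: (leq_trans (upper_bound N a R D)).
  apply: (leq_trans _ (@lower_bound N a R W s' hf)).
  rewrite !compl_sum.
  have h1 := @weight_bound N a R W s' hf.
  have h2 := hmax (@Dp a R s') ltac:(lia).
  lia.
Qed.
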